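(* For every finite point set $P$ in general position, the graph $G_\bigtriangledown(P)$ has at most three vertices of degree one.
   Context: A finite point set $P$ in the plane is in general position if no line through two points of $P$ makes an angle of $0^\circ$, $60^\circ$ or $120^\circ$ with the horizontal. A down-triangle is an equilateral triangle with one side parallel to the $x$-axis and the corner opposite to this side below that side. $G_\bigtriangledown(P)$ is the graph with vertex set $P$ in which $p,q$ are adjacent iff some (closed) down-triangle contains $p$ and $q$ and no other point of $P$. *)

(* Defs.v *)
From Stdlib Require Import Reals List.
Open Scope R_scope.

Definition point : Type := (R * R)%type.

(* General position: no line through two distinct points of P makes an angle
   of 0, 60 or 120 degrees with the horizontal, i.e. the direction vector
   (dx, dy) is not parallel to (1,0), (1, sqrt 3) or (-1, sqrt 3). *)
Definition general_position (P : list point) : Prop :=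
  forall p q, In p P -> In q P -> p <> q ->
    let dx := fst q - fst p in
    let dy := snd q - snd p in
    dy <> 0 /\ dy <> sqrt 3 * dx /\ dy <> - (sqrt 3 * dx).

(* The closed down-triangle with horizontal top side from (a, t) to (a + s, t),
   side length s > 0, and apex (a + s/2, t - s*sqrt 3/2) below that side. *)
Definition in_down_triangle (a t s : R) (r : point) : Prop :=
  snd r <= t /\
  t - snd r <= sqrt 3 * (fst r - a) /\
  t - snd r <= sqrt 3 * (a + s - fst r).

Definition gdown_adj (P : list point) (p q : point) : Prop :=
  In p P /\ In q P /\ p <> q /\
  exists a t s, 0 < s /\
    in_down_triangle a t s p /\ in_down_triangle a t s q /\
    (forall r, In r P -> in_down_triangle a t s r -> r = p \/ r = q).

Definition gdown_deg_one (P : list point) (p : point) : Prop :=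
  exists q, gdown_adj P p q /\ forall r, gdown_adj P p r -> r = q.

(* Main.v *)
Require Import Defs.
From Stdlib Require Import Reals List.
From Stdlib Require Import Lra Lia Classical.
Open Scope R_scope.

Definition Adj (f g k : point -> R) (P : list point) (p q : point) : Prop :=
  In p P /\ In q P /\ p <> q /\
  forall r, In r P -> Rmin (f p) (f q) <= f r -> Rmin (g p) (g q) <= g r ->
     Rmin (k p) (k q) <= k r -> r = p \/ r = q.

Lemma Adj_rot f g k P p q : Adj f g k P p q -> Adj k f g P p q.
Proof. intros [H1 [H2 [H3 H4]]]. repeat split; auto. Qed.

Lemma argmax (P : list point) (S : point -> Prop) (w : point -> R) :
  (exists q, In q P /\ S q) ->
  exists n, In n P /\ S n /\ forall r, In r P -> S r -> w r <= w n.
Proof.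
  induction P as [|a P IH]; intros [q [Hq Sq]].
  - destruct Hq.
  - destruct (classic (exists q, In q P /\ S q)) as [Ex|NEx].
    + destruct (IH Ex) as [n [Hn [Sn Hmax]]].
      destruct (classic (S a /\ w n <= w a)) as [[Sa Hw]|Hna].
      * exists a. split; [left; auto|split; auto].
        intros r [<-|Hr] Sr; [lra|]. specialize (Hmax r Hr Sr). lra.
      * exists n. split; [right; auto| split; auto].
        intros r [<-|Hr] Sr; [|auto].
        destruct (Rle_dec (w a) (w n)); auto. exfalso; apply Hna; split; auto; lra.
    + destruct Hq as [<-|Hq]; [|exfalso; apply NEx; eauto].
      exists a. split; [left; auto|split; auto].
      intros r [<-|Hr] Sr; [lra|]. exfalso; apply NEx; eauto.
Qed.

Lemma le_neq a b : a <= b -> b <> a -> a < b.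
Proof. intros H N. destruct (Rle_lt_or_eq_dec a b H); auto. exfalso; apply N; auto. Qed.

Lemma lemC f g k P p :
  (forall r, f r + g r + k r = 0) ->
  (forall r s, In r P -> In s P -> r <> s -> f r <> f s /\ g r <> g s /\ k r <> k s) ->
  In p P -> (exists q, In q P /\ f p < f q) ->
  exists n, Adj f g k P p n /\ f p < f n.
Proof.
  intros Hs Hi Hp Hex.
  destruct (argmax P (fun q => f p < f q) g Hex) as [n [Hn [Sn Hmax]]].
  assert (Hnp : n <> p). { intro E; subst; lra. }
  destruct (Hi p n Hp Hn (not_eq_sym Hnp)) as [Df [Dg Dk]].
  destruct (Rlt_dec (g n) (g p)) as [Lt|Ge].
  - exists n. split; auto. split; [auto|split;[auto|split; [auto|]]].
    intros r Hr Hf Hg _.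
    rewrite Rmin_left in Hf by lra. rewrite Rmin_right in Hg by lra.
    destruct (classic (r = p)) as [E|Ne]; [left; auto|right].
    destruct (Hi r p Hr Hp Ne) as [Df' _].
    assert (Hfr : f p < f r) by (apply le_neq; auto).
    specialize (Hmax r Hr Hfr).
    destruct (classic (r = n)) as [E|Ne']; auto.
    destruct (Hi r n Hr Hn Ne') as [_ [Dg' _]]. exfalso; apply Dg'; apply Rle_antisym; lra.
  - assert (Hgt : g p < g n) by (apply le_neq; auto; lra).
    destruct (argmax P (fun q => f p < f q /\ g p < g q) k (ex_intro _ n (conj Hn (conj Sn Hgt)))) as [m [Hm [[Sm1 Sm2] Hmax2]]].
    assert (Hmp : m <> p) by (intro E; subst; lra).
    exists m. split; auto.
    split; [auto|split;[auto|split; [auto|]]].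
    intros r Hr Hf Hg Hk.
    assert (k m < k p) by (pose proof (Hs m); pose proof (Hs p); lra).
    rewrite Rmin_left in Hf by lra. rewrite Rmin_left in Hg by lra. rewrite Rmin_right in Hk by lra.
    destruct (classic (r = p)) as [E|Ne]; [left; auto|right].
    destruct (Hi r p Hr Hp Ne) as [Df' [Dg' _]].
    assert (Hfr : f p < f r) by (apply le_neq; auto).
    assert (Hgr : g p < g r) by (apply le_neq; auto).
    specialize (Hmax2 r Hr (conj Hfr Hgr)).
    destruct (classic (r = m)) as [E|Ne']; auto.
    destruct (Hi r m Hr Hm Ne') as [_ [_ Dk']]. exfalso; apply Dk'; apply Rle_antisym; lra.
Qed.

Definition h1 (r:point) := -2 * snd r.
Definition h2 (r:point) := sqrt 3 * fst r + snd r.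
Definition h3 (r:point) := - (sqrt 3 * fst r) + snd r.

Lemma hsum r : h1 r + h2 r + h3 r = 0.
Proof. unfold h1, h2, h3. ring. Qed.
Lemma hsum2 r : h2 r + h3 r + h1 r = 0.
Proof. unfold h1, h2, h3. ring. Qed.
Lemma hsum3 r : h3 r + h1 r + h2 r = 0.
Proof. unfold h1, h2, h3. ring. Qed.

Lemma hinj P : general_position P -> forall r s, In r P -> In s P -> r <> s ->
  h1 r <> h1 s /\ h2 r <> h2 s /\ h3 r <> h3 s.
Proof.
  intros G r s Hr Hs Ne. destruct (G r s Hr Hs Ne) as [A [B C]].
  unfold h1,h2,h3. repeat split; intro E; [apply A| apply C | apply B]; lra.
Qed.

Lemma memb c1 c2 c3 r :
  in_down_triangle ((c2 + c1/2)/sqrt 3) (-c1/2) (-(c1+c2+c3)/sqrt 3) r <->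
  (c1 <= h1 r /\ c2 <= h2 r /\ c3 <= h3 r).
Proof.
  assert (S3 : 0 < sqrt 3) by (apply sqrt_lt_R0; lra).
  assert (E1 : sqrt 3 * (fst r - (c2 + c1/2)/sqrt 3) = sqrt 3 * fst r - (c2 + c1/2))
    by (field; apply Rgt_not_eq, S3).
  assert (E2 : sqrt 3 * ((c2 + c1/2)/sqrt 3 + -(c1+c2+c3)/sqrt 3 - fst r)
               = -(c1/2) - c3 - sqrt 3 * fst r) by (field; apply Rgt_not_eq, S3).
  unfold in_down_triangle, h1, h2, h3. rewrite E1, E2.
  split; intros [A [B C]]; repeat split; lra.
Qed.

Lemma adj_gdown P p q : general_position P -> Adj h1 h2 h3 P p q -> gdown_adj P p q.
Proof.
  intros G [Hp [Hq [Ne H]]].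
  assert (S3 : 0 < sqrt 3) by (apply sqrt_lt_R0; lra).
  destruct (hinj P G p q Hp Hq Ne) as [D1 _].
  set (c1 := Rmin (h1 p) (h1 q)). set (c2 := Rmin (h2 p) (h2 q)).
  set (c3 := Rmin (h3 p) (h3 q)).
  assert (Hneg : c1 + c2 + c3 < 0).
  { pose proof (Rmin_l (h1 p) (h1 q)). pose proof (Rmin_r (h1 p) (h1 q)).
    pose proof (Rmin_l (h2 p) (h2 q)). pose proof (Rmin_r (h2 p) (h2 q)).
    pose proof (Rmin_l (h3 p) (h3 q)). pose proof (Rmin_r (h3 p) (h3 q)).
    pose proof (hsum p). pose proof (hsum q). unfold c1, c2, c3.
    destruct (Rlt_or_le (h1 p) (h1 q)) as [L|L]; [lra|].
    assert (h1 q < h1 p) by (apply le_neq; auto). lra. }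
  repeat split; auto.
  exists ((c2 + c1/2)/sqrt 3), (-c1/2), (-(c1+c2+c3)/sqrt 3).
  split; [unfold Rdiv; apply Rmult_lt_0_compat; [lra| apply Rinv_0_lt_compat; lra]|].
  split; [apply memb; unfold c1, c2, c3; repeat split; apply Rmin_l|].
  split; [apply memb; unfold c1, c2, c3; repeat split; apply Rmin_r|].
  intros r Hr Hin. apply memb in Hin. destruct Hin as [A [B C]]. apply H; auto.
Qed.

Definition Mx (h : point -> R) P p := forall r, In r P -> h r <= h p.

Lemma deg1_max P p : general_position P -> In p P -> gdown_deg_one P p ->
  Mx h1 P p \/ Mx h2 P p \/ Mx h3 P p.
Proof.
  intros G Hp [q [Hq Huniq]].
  pose proof (hinj P G) as Hi.
  assert (Hi2 : forall r s, In r P -> In s P -> r <> s -> h2 r <> h2 s /\ h3 r <> h3 s /\ h1 r <> h1 s)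
    by (intros r s a b c; destruct (Hi r s a b c) as [x [y z]]; auto).
  assert (Hi3 : forall r s, In r P -> In s P -> r <> s -> h3 r <> h3 s /\ h1 r <> h1 s /\ h2 r <> h2 s)
    by (intros r s a b c; destruct (Hi r s a b c) as [x [y z]]; auto).
  apply NNPP; intro Hn.
  assert (E1 : exists r, In r P /\ h1 p < h1 r).
  { apply NNPP; intro N. apply Hn. left. intros r Hr.
    destruct (Rle_dec (h1 r) (h1 p)); auto. exfalso; apply N; exists r; split; auto; lra. }
  assert (E2 : exists r, In r P /\ h2 p < h2 r).
  { apply NNPP; intro N. apply Hn. right; left. intros r Hr.
    destruct (Rle_dec (h2 r) (h2 p)); auto. exfalso; apply N; exists r; split; auto; lra. }
  assert (E3 : exists r, In r P /\ h3 p < h3 r).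
  { apply NNPP; intro N. apply Hn. right; right. intros r Hr.
    destruct (Rle_dec (h3 r) (h3 p)); auto. exfalso; apply N; exists r; split; auto; lra. }
  destruct (lemC h1 h2 h3 P p hsum Hi Hp E1) as [n1 [A1 L1]].
  destruct (lemC h2 h3 h1 P p hsum2 Hi2 Hp E2) as [n2 [A2 L2]].
  destruct (lemC h3 h1 h2 P p hsum3 Hi3 Hp E3) as [n3 [A3 L3]].
  apply Adj_rot in A2. apply Adj_rot, Adj_rot in A3.
  apply (adj_gdown P p) in A1; auto. apply (adj_gdown P p) in A2; auto.
  apply (adj_gdown P p) in A3; auto.
  apply Huniq in A1. apply Huniq in A2. apply Huniq in A3. subst.
  pose proof (hsum q). pose proof (hsum p). lra.
Qed.

Lemma Mx_uniq h P x y : (forall r s, In r P -> In s P -> r <> s -> h r <> h s) ->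
  In x P -> In y P -> Mx h P x -> Mx h P y -> x = y.
Proof.
  intros I Hx Hy Mx_ My. apply NNPP; intro N. apply (I x y Hx Hy N).
  apply Rle_antisym; [apply My|apply Mx_]; auto.
Qed.

Ltac solve_pair N I := apply N; eapply Mx_uniq; [exact I|eassumption..].

Theorem lemma3 (P : list point) :
  NoDup P -> general_position P ->
  forall L : list point, NoDup L ->
    (forall p, In p L -> In p P /\ gdown_deg_one P p) ->
    (length L <= 3)%nat.
Proof.
  intros ND G L NDL HL.
  assert (Hm : forall x, In x L -> In x P /\ (Mx h1 P x \/ Mx h2 P x \/ Mx h3 P x)).
  { intros x Hx. destruct (HL x Hx) as [Hx1 Hx2]. split; auto. apply deg1_max; auto. }
  assert (I1 : forall r s, In r P -> In s P -> r <> s -> h1 r <> h1 s)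
    by (intros r s a b c; apply (hinj P G r s a b c)).
  assert (I2 : forall r s, In r P -> In s P -> r <> s -> h2 r <> h2 s)
    by (intros r s a b c; apply (hinj P G r s a b c)).
  assert (I3 : forall r s, In r P -> In s P -> r <> s -> h3 r <> h3 s)
    by (intros r s a b c; apply (hinj P G r s a b c)).
  destruct L as [|a [|b [|c [|d L']]]]; simpl; try lia.
  exfalso.
  apply NoDup_cons_iff in NDL as [Na NDL].
  apply NoDup_cons_iff in NDL as [Nb NDL].
  apply NoDup_cons_iff in NDL as [Nc NDL].
  assert (Nab : a <> b) by (intro E; subst; apply Na; simpl; auto).
  assert (Nac : a <> c) by (intro E; subst; apply Na; simpl; auto).
  assert (Nad : a <> d) by (intro E; subst; apply Na; simpl; auto).
  assert (Nbc : b <> c) by (intro E; subst; apply Nb; simpl; auto).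
  assert (Nbd : b <> d) by (intro E; subst; apply Nb; simpl; auto).
  assert (Ncd : c <> d) by (intro E; subst; apply Nc; simpl; auto).
  destruct (Hm a ltac:(simpl; auto)) as [Pa Ma].
  destruct (Hm b ltac:(simpl; auto)) as [Pb Mb].
  destruct (Hm c ltac:(simpl; auto)) as [Pc Mc].
  destruct (Hm d ltac:(simpl; auto)) as [Pd Md].
  destruct Ma as [Ma|[Ma|Ma]]; destruct Mb as [Mb|[Mb|Mb]];
  destruct Mc as [Mc|[Mc|Mc]]; destruct Md as [Md|[Md|Md]];
  first [ solve_pair Nab I1 | solve_pair Nab I2 | solve_pair Nab I3
        | solve_pair Nac I1 | solve_pair Nac I2 | solve_pair Nac I3
        | solve_pair Nad I1 | solve_pair Nad I2 | solve_pair Nad I3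
        | solve_pair Nbc I1 | solve_pair Nbc I2 | solve_pair Nbc I3
        | solve_pair Nbd I1 | solve_pair Nbd I2 | solve_pair Nbd I3
        | solve_pair Ncd I1 | solve_pair Ncd I2 | solve_pair Ncd I3 ].
Qed.
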